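(* Let $\sigma(x)=\mathrm{e}^{-x/2}$ and let $\{p_n\}_{n\ge0}$ be the orthonormal Laguerre polynomials on $(0,\infty)$, i.e. $p_n(x)=\frac{(-1)^n}{n!}\mathrm{e}^x\frac{\mathrm{d}^n}{\mathrm{d}x^n}(x^n\mathrm{e}^{-x})$, which satisfy $\int_0^\infty p_mp_n\mathrm{e}^{-x}\,\mathrm{d}x=\delta_{m,n}$. For $z=\mathrm{e}^{i\theta}$ with $|\theta|<\pi/2$ put $p_{n,z}(x)=z^{1/2}p_n(zx)$ and $N_{n,z}=\int_0^\infty|p_{n,z}(x)\sigma(zx)|^2\,\mathrm{d}x$, where $\sigma(zx)=\mathrm{e}^{-zx/2}$. Then, with $s_\theta=\cos\theta$, \[ N_{n,z}\le s_\theta^{-2n-1}\,2^{4n+2}\quad\text{for all integers } n\ge0. \]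
   Context: $z^{1/2}$ denotes the principal square root. *)

(* Defs.v *)
From Stdlib Require Import Reals.
From Coquelicot Require Import Coquelicot.
Open Scope R_scope.

Definition cexp (w : C) : C :=
  (exp (fst w) * cos (snd w), exp (fst w) * sin (snd w)).

(* Principal square root (branch cut on the negative real axis, Re >= 0). *)
Definition csqrt (w : C) : C :=
  (sqrt ((Cmod w + fst w) / 2),
   (if Rlt_dec (snd w) 0 then -1 else 1) * sqrt ((Cmod w - fst w) / 2)).

(* Coefficient of x^k in the orthonormal Laguerre polynomial
   p_n(x) = ((-1)^n/n!) e^x d^n/dx^n (x^n e^{-x}) = sum_k C(n,k) (-x)^k / k!. *)
Definition lag_coef (n k : nat) : R :=
  (-1) ^ k * Binomial.C n k / INR (Factorial.fact k).

Definition lagC (n : nat) (w : C) : C :=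
  sum_n (fun k => Cmult (RtoC (lag_coef n k)) (pow_n w k)) n.

Definition sigmaC (w : C) : C := cexp (Cmult (RtoC (- / 2)) w).

Definition zth (theta : R) : C := (cos theta, sin theta).

Definition pnz (n : nat) (z : C) (x : R) : C :=
  Cmult (csqrt z) (lagC n (Cmult z (RtoC x))).

Definition Nintegrand (n : nat) (z : C) (x : R) : R :=
  (Cmod (Cmult (pnz n z x) (sigmaC (Cmult z (RtoC x))))) ^ 2.

(* Main.v *)
Require Import Defs.
From Stdlib Require Import Reals Lra Lia.
From Coquelicot Require Import Coquelicot.
Open Scope R_scope.
Notation CU := (AbsRing_UniformSpace C_AbsRing).
Lemma cont_RtoC (x : R) : @continuous R_UniformSpace CU RtoC x.
Proof.
  intros P [eps HP]. exists eps. intros y Hy. apply HP.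
  change (Cmod (Cminus (RtoC y) (RtoC x)) < eps).
  rewrite <- RtoC_minus, Cmod_R. exact Hy.
Qed.

Lemma cont_line (z : C) (x : R) :
  @continuous R_UniformSpace CU (fun t => Cmult z (RtoC t)) x.
Proof.
  apply (@continuous_mult R_UniformSpace C_AbsRing (fun _ => z) RtoC).
  apply continuous_const. apply cont_RtoC.
Qed.

Lemma cont_pow (g : R -> C) (x : R) (k : nat) :
  @continuous R_UniformSpace CU g x ->
  @continuous R_UniformSpace CU (fun t => pow_n (K:=C_Ring) (g t) k) x.
Proof.
  intros Hg. induction k as [|k IH]; simpl.
  - apply continuous_const.
  - apply (@continuous_mult R_UniformSpace C_AbsRing); assumption.
Qed.

Lemma cont_lagC (n : nat) (g : R -> C) (x : R) :
  @continuous R_UniformSpace CU g x ->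
  @continuous R_UniformSpace CU (fun t => lagC n (g t)) x.
Proof.
  intros Hg. unfold lagC.
  assert (H : forall m, @continuous R_UniformSpace CU
    (fun t => sum_n (G:=C_AbelianMonoid) (fun k => Cmult (RtoC (lag_coef n k)) (pow_n (K:=C_Ring) (g t) k)) m) x).
  2: exact (H n).
  intro m. induction m as [|m IH].
  - refine (@continuous_ext R_UniformSpace CU (fun t => Cmult (RtoC (lag_coef n 0)) (pow_n (K:=C_Ring) (g t) 0)) _ x _ _).
    intro t. symmetry. apply (sum_O (G:=C_AbelianMonoid)).
    exact (@continuous_mult R_UniformSpace C_AbsRing (fun _ => RtoC (lag_coef n 0)) (fun t => pow_n (K:=C_Ring) (g t) 0) x
      (continuous_const _ _) (cont_pow g x 0 Hg)).
  - refine (@continuous_ext R_UniformSpace CU (fun t => plus (sum_n (G:=C_AbelianMonoid) (fun k => Cmult (RtoC (lag_coef n k)) (pow_n (K:=C_Ring) (g t) k)) m) (Cmult (RtoC (lag_coef n (S m))) (pow_n (K:=C_Ring) (g t) (S m)))) _ x _ _).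
    intro t. symmetry. apply (sum_Sn (G:=C_AbelianMonoid)).
    refine (@continuous_plus R_UniformSpace C_AbsRing (AbsRing_NormedModule C_AbsRing) _ (fun t => Cmult (RtoC (lag_coef n (S m))) (pow_n (K:=C_Ring) (g t) (S m))) x IH _).
    exact (@continuous_mult R_UniformSpace C_AbsRing (fun _ => RtoC (lag_coef n (S m))) (fun t => pow_n (K:=C_Ring) (g t) (S m)) x
      (continuous_const _ _) (cont_pow g x (S m) Hg)).
Qed.

Lemma cont_Cmod (g : R -> C) (x : R) :
  @continuous R_UniformSpace CU g x ->
  continuous (fun t => Cmod (g t)) x.
Proof.
  intros Hg.
  apply (@continuous_comp R_UniformSpace CU R_UniformSpace g (fun w => Cmod w)).
  exact Hg.
  exact (@filterlim_norm C_AbsRing (AbsRing_NormedModule C_AbsRing) (g x)).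
Qed.
Lemma Cmod_csqrt_zth (t : R) : Cmod (csqrt (zth t)) = 1.
Proof.
  assert (Hm : Cmod (zth t) = 1).
  { unfold Cmod, zth; simpl.
    assert (H: cos t * (cos t * 1) + sin t * (sin t * 1) = 1)
      by (pose proof (sin2_cos2 t); unfold Rsqr in *; nra).
    rewrite H; apply sqrt_1. }
  unfold csqrt. rewrite Hm. unfold Cmod at 1. simpl.
  pose proof (COS_bound t) as [H1 H2].
  assert (E: forall e : R, e * e = 1 ->
   sqrt ((1 + cos t) / 2) * (sqrt ((1 + cos t) / 2) * 1) +
   e * sqrt ((1 - cos t) / 2) * (e * sqrt ((1 - cos t) / 2) * 1) = 1).
  { intros e He.
    replace (e * sqrt ((1 - cos t) / 2) * (e * sqrt ((1 - cos t) / 2) * 1))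
      with ((e*e) * (sqrt ((1 - cos t) / 2) * sqrt ((1 - cos t) / 2))) by ring.
    rewrite He, !Rmult_1_r, !sqrt_sqrt by lra. lra. }
  destruct (Rlt_dec (sin t) 0); rewrite E; try apply sqrt_1; lra.
Qed.

Lemma Cmod_cexp (w : C) : Cmod (cexp w) = exp (fst w).
Proof.
  unfold Cmod, cexp; simpl.
  replace (exp (fst w) * cos (snd w) * (exp (fst w) * cos (snd w) * 1) +
     exp (fst w) * sin (snd w) * (exp (fst w) * sin (snd w) * 1))
    with (exp (fst w) * exp (fst w)) .
  apply sqrt_square. left; apply exp_pos.
  transitivity (exp (fst w) * exp (fst w) * (Rsqr (sin (snd w)) + Rsqr (cos (snd w)))).
  rewrite sin2_cos2; ring. unfold Rsqr; ring.
Qed.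

Lemma Nintegrand_eq (n : nat) (t x : R) :
  Nintegrand n (zth t) x = (Cmod (lagC n (Cmult (zth t) (RtoC x)))) ^ 2 * exp (- (cos t * x)).
Proof.
  unfold Nintegrand, pnz, sigmaC.
  rewrite !Cmod_mult, Cmod_csqrt_zth, Cmod_cexp.
  replace (fst (Cmult (RtoC (- / 2)) (Cmult (zth t) (RtoC x)))) with (- (cos t * x) / 2)
    by (unfold zth; simpl; field).
  replace (exp (- (cos t * x))) with (exp (- (cos t * x) / 2) ^ 2).
  ring.
  simpl. rewrite Rmult_1_r, <- exp_plus. f_equal. field.
Qed.
Lemma pow_fact_le_exp (y : R) (k : nat) : 0 <= y -> y ^ k / INR (Factorial.fact k) <= exp y.
Proof.
  intros Hy.
  assert (Hs : sum_f_R0 (fun i => / INR (Factorial.fact i) * y ^ i) k <= exp y).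
  { apply sum_incr.
    - unfold exp; destruct (exist_exp y) as [l Hl]; simpl; exact Hl.
    - intro i. apply Rmult_le_pos. left; apply Rinv_0_lt_compat, INR_fact_lt_0.
      apply pow_le; lra. }
  eapply Rle_trans; [|exact Hs].
  destruct k as [|k].
  - simpl. lra.
  - rewrite tech5. unfold Rdiv. rewrite Rmult_comm.
    assert (0 <= sum_f_R0 (fun i => / INR (Factorial.fact i) * y ^ i) k).
    { apply cond_pos_sum. intro i. apply Rmult_le_pos.
      left; apply Rinv_0_lt_compat, INR_fact_lt_0. apply pow_le; lra. }
    lra.
Qed.

Lemma Cmod_pow_n (w : C) (k : nat) : Cmod (pow_n (K:=C_Ring) w k) = Cmod w ^ k.
Proof.
  induction k as [|k IH]; simpl.
  - apply Cmod_1.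
  - change (Cmod (Cmult w (pow_n (K:=C_Ring) w k)) = Cmod w * Cmod w ^ k).
    rewrite Cmod_mult, IH. reflexivity.
Qed.

Lemma Cmod_sum_n (f : nat -> C) (m : nat) :
  Cmod (sum_n (G:=C_AbelianMonoid) f m) <= sum_f_R0 (fun k => Cmod (f k)) m.
Proof.
  induction m as [|m IH].
  - rewrite sum_O. simpl. lra.
  - rewrite sum_Sn, tech5.
    change (Cmod (Cplus (sum_n (G:=C_AbelianMonoid) f m) (f (S m))) <=
      sum_f_R0 (fun k => Cmod (f k)) m + Cmod (f (S m))).
    eapply Rle_trans. apply Cmod_triangle. lra.
Qed.

Lemma Cmod_line (t x : R) : 0 <= x -> Cmod (Cmult (zth t) (RtoC x)) = x.
Proof.
  intros Hx. rewrite Cmod_mult, Cmod_R, Rabs_pos_eq by lra.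
  unfold Cmod, zth; simpl.
  assert (H: cos t * (cos t * 1) + sin t * (sin t * 1) = 1)
      by (pose proof (sin2_cos2 t); unfold Rsqr in *; nra).
  rewrite H, sqrt_1. ring.
Qed.

Lemma lag_bound (n : nat) (t x : R) : 0 <= x -> 0 < cos t ->
  Cmod (lagC n (Cmult (zth t) (RtoC x))) <= (1 + 3 / cos t) ^ n * exp (cos t * x / 3).
Proof.
  intros Hx Hc. set (c := cos t) in *.
  unfold lagC. eapply Rle_trans. apply Cmod_sum_n.
  rewrite (Rplus_comm 1), binomial.
  rewrite (Rmult_comm _ (exp _)), scal_sum.
  apply sum_Rle. intros k Hk.
  rewrite Cmod_mult, Cmod_pow_n, Cmod_line, Cmod_R by lra.
  unfold lag_coef. rewrite pow1, Rmult_1_r.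
  assert (HC : 0 <= Binomial.C n k).
  { unfold Binomial.C. apply Rmult_le_pos. apply pos_INR.
    left; apply Rinv_0_lt_compat, Rmult_lt_0_compat; apply INR_fact_lt_0. }
  assert (HF : 0 < INR (Factorial.fact k)) by apply INR_fact_lt_0.
  assert (Habs : Rabs ((-1) ^ k * Binomial.C n k / INR (Factorial.fact k)) = Binomial.C n k / INR (Factorial.fact k)).
  { unfold Rdiv; rewrite !Rabs_mult, pow_1_abs, Rabs_inv, !Rabs_pos_eq by lra; ring. }
  rewrite Habs.
  pose proof (pow_fact_le_exp (c * x / 3) k) as He.
  assert (Hy: (c * x / 3) ^ k / INR (Factorial.fact k) <= exp (c * x / 3)).
  { apply He. apply Rmult_le_pos; [apply Rmult_le_pos|]; lra. }
  replace ((c * x / 3) ^ k) with ((c / 3) ^ k * x ^ k) in Hy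
    by (rewrite <- Rpow_mult_distr; f_equal; field).
  assert (Hid : x ^ k / INR (Factorial.fact k) = (3 / c) ^ k * ((c / 3) ^ k * x ^ k / INR (Factorial.fact k))).
  { unfold Rdiv at 3. rewrite <- Rmult_assoc, <- Rmult_assoc, <- Rpow_mult_distr.
    replace (3 / c * (c / 3)) with 1 by (field; lra). rewrite pow1. field. lra. }
  replace (Binomial.C n k / INR (Factorial.fact k) * x ^ k) with (Binomial.C n k * (x ^ k / INR (Factorial.fact k))) by (field; lra).
  rewrite Hid.
  replace (Binomial.C n k * (3 / c) ^ k * exp (c * x / 3)) with
    (Binomial.C n k * ((3 / c) ^ k * exp (c * x / 3))) by ring.
  apply Rmult_le_compat_l; auto.
  apply Rmult_le_compat_l. apply pow_le. apply Rlt_le, Rdiv_lt_0_compat; lra.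
  exact Hy.
Qed.
Lemma improper_bound (f : R -> R) (B : R) :
  (forall x, continuous f x) ->
  (forall x, 0 <= x -> 0 <= f x) ->
  (forall b, 0 <= b -> RInt f 0 b <= B) ->
  exists N, is_RInt_gen f (at_right 0) (Rbar_locally p_infty) N /\ N <= B.
Proof.
  intros Hc Hpos Hb.
  set (F := fun b => RInt f 0 b).
  assert (Hex : forall a b, ex_RInt f a b).
  { intros a b. apply (ex_RInt_continuous (V:=R_CompleteNormedModule)). intros; apply Hc. }
  assert (HdF : forall x, is_derive F x (f x)).
  { intro x. apply is_derive_RInt with (a := 0).
    apply filter_forall. intro y. apply RInt_correct, Hex. apply Hc. }
  assert (HDF : forall x, Derive F x = f x).
  { intro x. apply is_derive_unique, HdF. }
  assert (Hmono : forall a b, 0 <= a <= b -> F a <= F b).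
  { intros a b Hab. unfold F. rewrite <- (RInt_Chasles f 0 a b) by apply Hex.
    assert (0 <= RInt f a b).
    { apply RInt_ge_0. lra. apply Hex. intros; apply Hpos; lra. }
    change (plus (RInt f 0 a) (RInt f a b)) with (RInt f 0 a + RInt f a b). lra. }
  set (E := fun y => exists b, 0 <= b /\ y = F b).
  destruct (completeness E) as [L [HL1 HL2]].
  { exists B. intros y [b [Hb0 ->]]. apply Hb; auto. }
  { exists (F 0). exists 0. split; [lra|reflexivity]. }
  assert (HF0 : F 0 = 0). { unfold F. rewrite RInt_point. reflexivity. }
  exists (L - 0). split.
  - eapply is_RInt_gen_ext.
    2: apply (is_RInt_gen_Derive (Fa := at_right 0) (Fb := Rbar_locally p_infty) F 0 L).
    + apply Filter_prod with (fun _ => True) (fun _ => True).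
      apply filter_true. apply filter_true. intros. apply HDF.
    + apply Filter_prod with (fun _ => True) (fun _ => True).
      apply filter_true. apply filter_true. intros. eexists; apply HdF.
    + apply Filter_prod with (fun _ => True) (fun _ => True).
      apply filter_true. apply filter_true. intros.
      apply (continuous_ext f). intro; symmetry; apply HDF. apply Hc.
    + assert (Hcont : continuous F 0).
      { apply (ex_derive_continuous (K:=R_AbsRing) (V:=R_NormedModule)). eexists; apply HdF. }
      unfold continuous in Hcont. rewrite HF0 in Hcont.
      apply (filterlim_filter_le_1 (F:=locally 0)).
      intros P [d Hd]. exists d. intros y Hy _. apply Hd. exact Hy.
      exact Hcont.
    + intros P [eps HP]. 
      assert (Hlt : L - eps < L) by (destruct eps; simpl; lra).
      destruct (Req_dec 0 0) as [_|]; [|lra].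
      assert (exists b, 0 <= b /\ L - eps < F b) as [b0 [Hb0 Hb0']].
      { apply Classical_Pred_Type.not_all_not_ex. intro H.
        assert (L <= L - eps); [|lra].
        apply HL2. intros y [b [Hb' ->]].
        destruct (Rlt_le_dec (L - eps) (F b)); auto. exfalso; apply (H b); auto. }
      exists b0. intros b Hbb. apply HP.
      assert (F b0 <= F b) by (apply Hmono; lra).
      assert (F b <= L) by (apply HL1; exists b; split; [lra|reflexivity]).
      change (Rabs (F b - L) < eps). apply Rabs_def1; lra.
  - assert (L <= B). { apply HL2. intros y [b [Hb0 ->]]. apply Hb; auto. } lra.
Qed.

Theorem theorem3 (theta : R) (n : nat) :
  Rabs theta < PI / 2 ->
  exists N : R,
    is_RInt_gen (Nintegrand n (zth theta)) (at_right 0) (Rbar_locally p_infty) N /\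
    N <= / (cos theta ^ (2 * n + 1)) * 2 ^ (4 * n + 2).
Proof.
  intros Hth.
  assert (Hc : 0 < cos theta).
  { apply cos_gt_0; apply Rabs_def2 in Hth; lra. }
  assert (Hc1 : cos theta <= 1) by apply COS_bound.
  set (c := cos theta) in *.
  set (A := (1 + 3 / c) ^ n).
  assert (HA : 0 <= A) by (apply pow_le; apply Rplus_le_le_0_compat; [lra|apply Rlt_le, Rdiv_lt_0_compat; lra]).
  set (G := fun t => - (3 / c) * A ^ 2 * exp (- (c * t / 3))).
  set (g := fun t => A ^ 2 * exp (- (c * t / 3))).
  assert (HG : forall t, is_derive G t (g t)).
  { intro t. unfold G, g. auto_derive; auto. unfold Rdiv. field. lra. }
  assert (Hgc : forall t, continuous g t).
  { intro t. apply (ex_derive_continuous (K:=R_AbsRing) (V:=R_NormedModule)). unfold g. auto_derive; auto. }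
  apply improper_bound.
  - intro x.
    apply (continuous_ext (fun t => Cmod (lagC n (Cmult (zth theta) (RtoC t))) *
       Cmod (lagC n (Cmult (zth theta) (RtoC t))) * exp (- (c * t)))).
    { intro t. rewrite Nintegrand_eq. fold c. match goal with |- ?a = ?b => change (@eq R a b) end. ring. }
    apply (continuous_mult (K:=R_AbsRing)).
    apply (continuous_mult (K:=R_AbsRing)); apply cont_Cmod, cont_lagC, cont_line.
    apply continuous_exp_comp.
    apply (ex_derive_continuous (K:=R_AbsRing) (V:=R_NormedModule)). auto_derive; auto.
  - intros x _. rewrite Nintegrand_eq. apply Rmult_le_pos. apply pow2_ge_0.
    left; apply exp_pos.
  - intros b Hb.
    assert (Hgi : is_RInt g 0 b (minus (G b) (G 0))).
    { apply (is_RInt_derive (V:=R_CompleteNormedModule)). intros; apply HG. intros; apply Hgc. }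
    apply Rle_trans with (RInt g 0 b).
    + apply RInt_le. exact Hb.
      apply (ex_RInt_continuous (V:=R_CompleteNormedModule)). intros z _.
      apply (continuous_ext (fun t => Cmod (lagC n (Cmult (zth theta) (RtoC t))) *
         Cmod (lagC n (Cmult (zth theta) (RtoC t))) * exp (- (c * t)))).
      { intro t. rewrite Nintegrand_eq. fold c. match goal with |- ?a = ?b => change (@eq R a b) end. ring. }
      apply (continuous_mult (K:=R_AbsRing)).
      apply (continuous_mult (K:=R_AbsRing)); apply cont_Cmod, cont_lagC, cont_line.
      apply continuous_exp_comp.
      apply (ex_derive_continuous (K:=R_AbsRing) (V:=R_NormedModule)). auto_derive; auto.
      eexists; exact Hgi.
      intros t Ht. rewrite Nintegrand_eq. fold c. unfold g.
      pose proof (lag_bound n theta t ltac:(lra) Hc) as HL. fold c A in HL.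
      assert (H2 : Cmod (lagC n (Cmult (zth theta) (RtoC t))) ^ 2 <= (A * exp (c * t / 3)) ^ 2).
      { apply pow_incr. split. apply Cmod_ge_0. exact HL. }
      replace (exp (- (c * t / 3))) with (exp (c * t / 3) ^ 2 * exp (- (c * t))).
      replace (A ^ 2 * (exp (c * t / 3) ^ 2 * exp (- (c * t)))) with ((A * exp (c * t / 3)) ^ 2 * exp (- (c * t))) by ring.
      apply Rmult_le_compat_r. left; apply exp_pos. exact H2.
      simpl. rewrite Rmult_1_r, <- !exp_plus. f_equal. field.
    + rewrite (is_RInt_unique g 0 b _ Hgi).
      unfold G. change (minus ?a ?b) with (a - b).
      assert (Hw : 3 / c * A ^ 2 <= / c ^ (2 * n + 1) * 2 ^ (4 * n + 2)).
      { replace (4 * n + 2)%nat with (2 * (2 * n + 1))%nat by lia.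
        rewrite pow_mult. replace (2 ^ 2) with 4 by ring.
        rewrite <- pow_inv, <- Rpow_mult_distr.
        replace (2 * n + 1)%nat with (n * 2 + 1)%nat by lia.
        rewrite pow_add, pow_mult, pow_1.
        assert (HAW : A <= (/ c * 4) ^ n).
        { apply pow_incr. split. apply Rplus_le_le_0_compat; [lra|apply Rlt_le, Rdiv_lt_0_compat; lra].
          apply Rmult_le_reg_l with c. lra. field_simplify; lra. }
        assert (HA2 : A ^ 2 <= ((/ c * 4) ^ n) ^ 2) by (apply pow_incr; lra).
        assert (0 < / c) by (apply Rinv_0_lt_compat; lra).
        replace (3 / c * A ^ 2) with (A ^ 2 * (3 * / c)) by (field; lra).
        apply Rmult_le_compat. apply pow2_ge_0. lra. exact HA2. lra. }
      assert (0 < exp (- (c * b / 3))) by apply exp_pos.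
      rewrite Rmult_0_r. unfold Rdiv at 4. rewrite Rmult_0_l, Ropp_0, exp_0.
      assert (0 <= 3 / c * A ^ 2).
      { apply Rmult_le_pos. apply Rlt_le, Rdiv_lt_0_compat; lra. apply pow2_ge_0. }
      nra.
Qed.
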